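(* Let $\mathcal{A}$ be a complete rpoNFA with a single initial state and depth $k$. Then $L(\mathcal{A})$ is $k$-$\mathcal{R}$-trivial.
   Context: An NFA $\mathcal{A}=(Q,\Sigma,\cdot,I,F)$ is complete if $q\cdot a\neq\emptyset$ for all $q,a$. A poNFA is an NFA whose reachability relation is a partial order (only self-loops as cycles); an rpoNFA is a poNFA such that $q\in q\cdot a$ implies $q\cdot a=\{q\}$. The depth is the number of input symbols on a longest simple path (pairwise distinct states) starting in an initial state. $\mathrm{sub}_k(v)$ is the set of subsequences of $v$ of length at most $k$; $u\sim_k v$ iff $\mathrm{sub}_k(u)=\mathrm{sub}_k(v)$; $x\sim^{\mathcal{R}}_k y$ iff each prefix of $x$ is $\sim_k$-equivalent to some prefix of $y$ and vice versa. A language is $k$-$\mathcal{R}$-trivial if it is a union of $\sim^{\mathcal{R}}_k$-classes. *)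

(* Defs.v *)
From HB Require Import structures.
From mathcomp Require Import all_boot.
Set Implicit Arguments. Unset Strict Implicit. Unset Printing Implicit Defensive.

Record nfa (Q Sigma : finType) := NFA {
  trans : Q -> Sigma -> {set Q};
  init  : {set Q};
  final : {set Q} }.

Section NFA.
Variables (Q Sigma : finType) (A : nfa Q Sigma).

Definition trans_set (S : {set Q}) (a : Sigma) : {set Q} :=
  \bigcup_(q in S) trans A q a.
Definition trans_word (S : {set Q}) (w : seq Sigma) : {set Q} :=
  foldl trans_set S w.

Definition accepts (w : seq Sigma) : bool :=
  trans_word (init A) w :&: final A != set0.

Definition complete : Prop := forall q a, trans A q a != set0.

Definition reach (p q : Q) : Prop := exists w, q \in trans_word [set p] w.

(* poNFA: reachability relation is a partial order (antisymmetric; it is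
   always reflexive and transitive) *)
Definition poNFA : Prop := forall p q, reach p q -> reach q p -> p = q.

Definition rpoNFA : Prop :=
  poNFA /\ forall q a, q \in trans A q a -> trans A q a = [set q].

Fixpoint is_run (q : Q) (w : seq Sigma) (qs : seq Q) : bool :=
  match w, qs with
  | [::], [::] => true
  | a :: w', p :: qs' => (p \in trans A q a) && is_run p w' qs'
  | _, _ => false
  end.

Definition simple_path (q : Q) (w : seq Sigma) (qs : seq Q) : bool :=
  is_run q w qs && uniq (q :: qs).

Definition has_depth (k : nat) : Prop :=
  (exists q w qs, [/\ q \in init A, simple_path q w qs & size w = k]) /\
  (forall q w qs, q \in init A -> simple_path q w qs -> size w <= k).

End NFA.

Section Subseq.
Variable (Sigma : eqType).

Definition sub_k (k : nat) (v : seq Sigma) : pred (seq Sigma) :=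
  fun x => (size x <= k) && subseq x v.

Definition sim_k (k : nat) (u v : seq Sigma) : Prop := sub_k k u =i sub_k k v.

Definition simR_k (k : nat) (x y : seq Sigma) : Prop :=
  (forall x', prefix x' x -> exists2 y', prefix y' y & sim_k k x' y') /\
  (forall y', prefix y' y -> exists2 x', prefix x' x & sim_k k x' y').

Definition k_R_trivial (k : nat) (L : pred (seq Sigma)) : Prop :=
  forall x y, simR_k k x y -> L x = L y.

End Subseq.

(* Main.v *)
Require Import Defs.
From mathcomp Require Import all_boot.
Set Implicit Arguments. Unset Strict Implicit. Unset Printing Implicit Defensive.

Section Seqs.
Variable T : eqType.

Lemma subseq_skip (a : T) u w s : a \notin u -> subseq (a :: w) (u ++ a :: s) = subseq w s.
Proof.
elim: u => [|c u IH] /=; first by rewrite eqxx.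
rewrite inE negb_or => /andP [ac au]; by rewrite (negbTE ac) IH.
Qed.

Lemma prefix_catl (u x1 x : seq T) : prefix x1 x -> prefix (u ++ x1) (u ++ x).
Proof. by elim: u => [|c u IH] //= h; rewrite eqxx IH. Qed.

Lemma prefix_split (v y y' : seq T) a : prefix y' (v ++ a :: y) ->
  (exists2 c, c \in y' & c \notin v) -> exists2 y1, y' = v ++ a :: y1 & prefix y1 y.
Proof.
elim: v y' => [|c v IH] y'.
  case: y' => [_ [e] //|d y'] /=.
  by move=> /andP [/eqP -> h] _; exists y'.
case: y' => [_ [e] //|d y'] /=.
move=> /andP [/eqP dc h] [e]; rewrite inE dc => /orP [/eqP -> | ey'];
  rewrite inE ?eqxx // negb_or => /andP [ec ev].
have [y1 -> py1] := IH _ h (ex_intro2 _ _ e ey' ev).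
by exists y1; rewrite // dc.
Qed.

Lemma split_first (P : pred T) x : has (predC P) x ->
  exists u, exists a, exists x', [/\ x = u ++ a :: x', all P u & ~~ P a].
Proof.
elim: x => [|c x IH] //=; case Pc: (P c) => /=.
- move=> /IH [u [a [x' [-> au na]]]]; exists (c :: u), a, x'; by rewrite /= Pc.
- by move=> _; exists [::], c, x; rewrite Pc.
Qed.

Lemma sim_sym k (x y : seq T) : sim_k k x y -> sim_k k y x.
Proof. by move=> h w; rewrite h. Qed.

Lemma simE k (x y : seq T) : sim_k k x y ->
  forall w, ((size w <= k) && subseq w x) = ((size w <= k) && subseq w y).
Proof. by move=> h w; have := h w. Qed.

Lemma sim1 k (x y : seq T) b : sim_k k.+1 x y -> (b \in x) = (b \in y).
Proof. by move=> /simE /(_ [:: b]) /=; rewrite !sub1seq. Qed.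

Lemma half k u v a (x y : seq T) : a \notin u -> a \notin v ->
  (forall x', prefix x' (u ++ a :: x) -> exists2 y', prefix y' (v ++ a :: y) & sim_k k.+1 x' y') ->
  forall x1, prefix x1 x -> exists2 y1, prefix y1 y & sim_k k x1 y1.
Proof.
move=> au av H x1 px1.
have hp : prefix (a :: x1) (a :: x) by rewrite /= eqxx px1.
have [y' py' sim] := H _ (prefix_catl u hp).
have ay' : a \in y'.
  by rewrite -(sim1 _ sim) mem_cat mem_head orbT.
have [y1 ey' py1] := prefix_split py' (ex_intro2 _ _ a ay' av).
exists y1 => // w; have := simE sim (a :: w); rewrite ey' /= !subseq_skip //.
Qed.

End Seqs.

Section Aux.
Variables (Q Sigma : finType) (A : nfa Q Sigma).

Lemma tw_cons S c w : trans_word A S (c :: w) = trans_word A (trans_set A S c) w.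
Proof. by []. Qed.
Lemma tw_nil S : trans_word A S [::] = S. Proof. by []. Qed.
Lemma tw_cat S u w : trans_word A S (u ++ w) = trans_word A (trans_word A S u) w.
Proof. by rewrite /trans_word foldl_cat. Qed.
Lemma trans_set1 p c : trans_set A [set p] c = trans A p c.
Proof. by rewrite /trans_set big_set1. Qed.

Lemma tw_mem (S : {set Q}) w r : r \in trans_word A S w <-> exists2 p, p \in S & r \in trans_word A [set p] w.
Proof.
elim: w S => [|c w IH] S.
  rewrite !tw_nil; split; first by move=> h; exists r; rewrite ?set11.
  by case=> p pS /set1P ->.
rewrite tw_cons; split.
  move=> /IH [p' /bigcupP [p pS p'p] rp'].
  exists p => //; rewrite tw_cons; apply/IH; exists p' => //; by rewrite trans_set1.
case=> p pS; rewrite tw_cons => /IH [p']; rewrite trans_set1 => p'p rp'.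
apply/IH; exists p' => //; apply/bigcupP; by exists p.
Qed.

Lemma tw_eq (S : {set Q}) x y : (forall p, p \in S -> trans_word A [set p] x = trans_word A [set p] y) ->
  trans_word A S x = trans_word A S y.
Proof.
move=> H; apply/setP=> r; apply/idP/idP => /tw_mem [p pS h]; apply/tw_mem; exists p => //.
  by rewrite -H. by rewrite H.
Qed.

Lemma loop q u : (forall a, q \in trans A q a -> trans A q a = [set q]) ->
  all (fun a => q \in trans A q a) u -> trans_word A [set q] u = [set q].
Proof.
move=> rpo; elim: u => [|c u IH] //; rewrite [all _ _]/= => /andP [h hu].
by rewrite tw_cons trans_set1 rpo // IH.
Qed.

Lemma run_reach p w qs r : is_run A p w qs -> r \in qs -> reach A p r.
Proof.
elim: w p qs => [|c w IH] p [|s qs] //=; rewrite ?in_nil //.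
move=> /andP [sp hr]; rewrite inE => /orP [/eqP -> | rq].
  by exists [:: c]; rewrite tw_cons tw_nil trans_set1.
have [w' hw'] := IH _ _ hr rq.
exists (c :: w'); rewrite tw_cons; apply/tw_mem; exists s => //; by rewrite trans_set1.
Qed.

Lemma main k : complete A -> rpoNFA A -> forall q x y,
  (forall w qs, simple_path A q w qs -> size w <= k) -> simR_k k x y ->
  trans_word A [set q] x = trans_word A [set q] y.
Proof.
move=> comp [po rpo]; elim: k => [|k IHk] q x y Hd [S1 S2].
  have all_sl : forall a, q \in trans A q a.
    move=> a; have /set0Pn [p pa] : trans A q a != set0 := comp q a.
    have [pq|pq] := eqVneq p q; first by rewrite pq in pa.
    have := Hd [:: a] [:: p]; rewrite /simple_path /= pa !inE eq_sym pq.
    by move=> /(_ isT).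
  have ha : forall z, all (fun a => q \in trans A q a) z.
    by move=> z; apply/allP => a _; apply: all_sl.
  by rewrite (loop (rpo q) (ha x)) (loop (rpo q) (ha y)).
set sl := fun a => q \in trans A q a.
have letter : forall (X Y : seq Sigma),
    (forall y', prefix y' Y -> exists2 x', prefix x' X & sim_k k.+1 x' y') ->
    forall b, b \in Y -> b \in X.
  move=> X Y H b bY; have [x' px' sim] := H Y (prefix_refl Y).
  have h : b \in x' by rewrite (sim1 _ sim).
  by move: px'; rewrite prefixE => /eqP hh; rewrite -hh in h; apply: mem_take h.
case hx: (has (predC sl) x); last first.
  have ax : all sl x by rewrite -(negbK (all _ _)) -has_predC hx.
  have ay : all sl y.
    apply/allP => b /(letter _ _ S2) bx; exact: (allP ax).
  by rewrite (loop (rpo q) ax) (loop (rpo q) ay).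
have [u [a [x'' [ex au na]]]] := split_first hx.
have hy : has (predC sl) y.
  apply/hasP; exists a => //; apply: (letter y x) => [y' py'|].
    by have [x' ? ?] := S1 y' py'; exists x' => //; apply: sim_sym.
  by rewrite ex mem_cat mem_head orbT.
have [v [b [y'' [ey av nb]]]] := split_first hy.
have anu : a \notin u by apply/negP => /(allP au); apply/negP.
have bnv : b \notin v by apply/negP => /(allP av); apply/negP.
have ab : a = b.
  have pv : prefix (v ++ [:: b]) y.
    by rewrite ey; apply: prefix_catl; rewrite /= eqxx prefix0s.
  have [x' px' sim] := S2 _ pv.
  have bx' : b \in x' by rewrite (sim1 _ sim) mem_cat mem_head orbT.
  have bnu : b \notin u by apply/negP => /(allP au); apply/negP.
  rewrite ex in px'; have [x1 ex' _] := prefix_split px' (ex_intro2 _ _ b bx' bnu).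
  have : a \in v ++ [:: b] by rewrite -(sim1 _ sim) ex' mem_cat mem_head orbT.
  rewrite mem_cat inE => /orP [av' | /eqP //].
  by move: (allP av _ av') na => ->.
subst b.
have simk : simR_k k x'' y''.
  split.
    apply: (half anu bnv) => x' px'; rewrite -ex in px'.
    by have [y' ? ?] := S1 x' px'; exists y' => //; rewrite -ey.
  move=> y1 py1.
  have H2 : forall y', prefix y' (v ++ a :: y'') ->
      exists2 x', prefix x' (u ++ a :: x'') & sim_k k.+1 y' x'.
    move=> y' py'; rewrite -ey in py'; have [x' h1 h2] := S2 y' py'.
    by exists x'; [rewrite -ex | exact: sim_sym].
  have [x1 ? ?] := half bnv anu H2 py1.
  by exists x1 => //; apply: sim_sym.
rewrite ex ey !tw_cat (loop (rpo q) au) (loop (rpo q) av) !tw_cons trans_set1.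
apply: tw_eq => q' q'a; apply: IHk => // w qs hp.
have q'q : q' != q by apply/eqP => e; move: na; rewrite /sl /=; rewrite e in q'a; rewrite q'a.
have qnqs : q \notin qs.
  apply/negP => qqs; move: hp => /andP [hr _].
  have r1 := run_reach hr qqs.
  have r2 : reach A q q' by exists [:: a]; rewrite tw_cons tw_nil trans_set1.
  by move: q'q; rewrite (po _ _ r1 r2) eqxx.
have := Hd (a :: w) (q' :: qs); move: hp; rewrite /simple_path /= q'a => /andP [-> ->].
by rewrite inE negb_or eq_sym q'q qnqs => /(_ isT).
Qed.

End Aux.

Theorem lemma3 (Q Sigma : finType) (A : nfa Q Sigma) (k : nat) :
  complete A -> rpoNFA A -> (exists i0, init A = [set i0]) -> has_depth A k ->
  k_R_trivial k (accepts A).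
Proof.
move=> comp rpo [i0 hi] [_ Hd] x y sim.
rewrite /accepts hi (@main _ _ A k comp rpo i0 x y) //.
by move=> w qs; apply: Hd; rewrite hi set11.
Qed.
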